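(* (i) If $\mathcal{U}$ is a subspace of $\mathbb{R}^n$ with $\mu(\mathcal{U})<1/2$, then $\mathcal{U}$ is realizable. (ii) For every $\alpha\in(1/2,1]$ there is a subspace $\mathcal{U}$ (of some $\mathbb{R}^n$) with $\mu(\mathcal{U})=\alpha$ that is not realizable.
   Context: For a subspace $\mathcal{U}\subseteq\mathbb{R}^n$, $P_{\mathcal{U}}$ denotes the orthogonal projector onto $\mathcal{U}$ and the coherence of $\mathcal{U}$ is $\mu(\mathcal{U})=\max_{i\in\{1,\dots,n\}}\|P_{\mathcal{U}}e_i\|_2^2$, where $e_i$ is the $i$-th standard basis vector. A correlation matrix is a positive semidefinite matrix with all diagonal entries equal to $1$; $\mathcal{U}$ is realizable if there is an $n\times n$ correlation matrix whose nullspace contains $\mathcal{U}$. *)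

(* Defs.v *)
(* Vectors of R^n are column vectors 'cV[R]_n; a subspace U of
   R^n is represented as the row space of a matrix U : 'M[R]_(m, n)
   (its rows, transposed, span the subspace). *)
From HB Require Import structures.
From mathcomp Require Import all_boot all_order all_algebra.
From mathcomp Require Import reals.
Set Implicit Arguments. Unset Strict Implicit. Unset Printing Implicit Defensive.
Import Order.TTheory GRing.Theory Num.Theory.
Local Open Scope ring_scope.

Section Defs.
Variable R : realType.

Definition sqnorm n (v : 'cV[R]_n) : R := \sum_(j < n) v j 0 ^+ 2.

Definition std_basis n (i : 'I_n) : 'cV[R]_n := delta_mx i 0.

Definition orth_proj m n (U : 'M[R]_(m, n)) : 'M[R]_n :=
  let B := row_base U in (B^T *m invmx (B *m B^T)) *m B.

Definition coherence m n (U : 'M[R]_(m, n)) : R :=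
  \big[Num.max/0]_(i < n) sqnorm (orth_proj U *m std_basis i).

Definition psd n (C : 'M[R]_n) : Prop :=
  C^T = C /\ forall x : 'cV[R]_n, 0 <= (x^T *m C *m x) 0 0.

Definition correlation_matrix n (C : 'M[R]_n) : Prop :=
  psd C /\ forall i : 'I_n, C i i = 1.

Definition realizable m n (U : 'M[R]_(m, n)) : Prop :=
  exists C : 'M[R]_n, correlation_matrix C /\
    forall v : 'rV[R]_n, (v <= U)%MS -> C *m v^T = 0.

End Defs.

(* Main.v *)
Require Import Defs.
From HB Require Import structures.
From mathcomp Require Import all_boot all_order all_algebra.
From mathcomp Require Import reals.
From mathcomp Require Import ring lra.
Import Order.TTheory GRing.Theory Num.Theory.
Local Open Scope ring_scope.

Module Helpers.
Set Implicit Arguments. Unset Strict Implicit.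

Section Proj.
Variable R : realType.

Lemma gram_row_eq0 (k : nat) (v : 'rV[R]_k) : (v *m v^T) 0 0 = 0 -> v = 0.
Proof.
rewrite mxE => H.
have H2 : forall j, true -> v 0 j * v^T j 0 = 0.
  apply/psumr_eq0P => // j _; rewrite mxE -expr2; exact: sqr_ge0.
apply/matrixP => i j; rewrite (ord1 i) mxE.
have := H2 j isT; rewrite mxE -expr2 => /eqP; rewrite sqrf_eq0 => /eqP //.
Qed.

Lemma gram_unit m n (B : 'M[R]_(m,n)) : row_free B -> B *m B^T \in unitmx.
Proof.
move=> fB; rewrite -row_free_unit; apply: inj_row_free => v H.
have: (v *m B) *m (v *m B)^T = 0.
  by rewrite trmx_mul mulmxA -(mulmxA v) H mul0mx.
move=> H2; have := @gram_row_eq0 _ (v *m B); rewrite H2 mxE => /(_ erefl) H3.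
apply: (row_free_inj fB); by rewrite H3 mul0mx.
Qed.

Variables (m n : nat) (U : 'M[R]_(m, n)).

Lemma orth_proj_sym : (orth_proj U)^T = orth_proj U.
Proof.
rewrite /orth_proj; move: (row_base U) => B.
by rewrite !trmx_mul trmxK trmx_inv trmx_mul trmxK mulmxA.
Qed.

Lemma orth_proj_idem : orth_proj U *m orth_proj U = orth_proj U.
Proof.
rewrite /orth_proj; have uG := gram_unit (row_base_free U).
move: (row_base U) uG => B uG.
rewrite !mulmxA -(mulmxA _ B) -(mulmxA _ (B *m B^T)) mulmxV // mulmx1 //.
Qed.

Lemma orth_proj_fix (v : 'rV[R]_n) : (v <= U)%MS -> orth_proj U *m v^T = v^T.
Proof.
move=> vU; have : (v <= row_base U)%MS by rewrite eq_row_base.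
case/submxP => D ->.
rewrite /orth_proj; have uG := gram_unit (row_base_free U).
move: (row_base U) uG D => B uG D.
by rewrite trmx_mul -!mulmxA (mulmxA B) (mulmxA (invmx _)) mulVmx // mul1mx.
Qed.

Lemma orth_proj_kill (x : 'cV[R]_n) : U *m x = 0 -> orth_proj U *m x = 0.
Proof.
move=> Ux; have : (row_base U <= U)%MS by rewrite eq_row_base.
case/submxP => D HD.
have Bx : row_base U *m x = 0 by rewrite HD -mulmxA Ux mulmx0.
by rewrite /orth_proj -mulmxA -mulmxA -(mulmxA _ (row_base U) x) Bx !mulmx0.
Qed.

End Proj.

Section Lin.
Variable R : realType.

Lemma argmax_ex n (j : 'I_n) (F : 'I_n -> R) : exists k, forall i, F i <= F k.
Proof.
have [k _ Hk] := @arg_maxP _ R _ j predT F isT.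
by exists k => i; apply: Hk.
Qed.

Lemma argmin_ex n (j : 'I_n) (F : 'I_n -> R) : exists k, forall i, F k <= F i.
Proof.
have [k _ Hk] := @arg_minP _ R _ j predT F isT.
by exists k => i; apply: Hk.
Qed.

Lemma aux_ineq (m r : R) : m < 0 -> 0 <= r -> r < 1 -> 1 - r * (1 - r * m) <= m -> False.
Proof.
move=> hm hr hr1 H.
have h1 : (1 - r) * m < 0 by rewrite pmulr_rlt0 // subr_gt0.
have h2 : (1 - r) * m * r <= 0 by apply: mulr_le0_ge0 => //; exact: ltW.
nra.
Qed.

Variable n : nat.
Variables (W : 'M[R]_n) (rho : R).
Hypothesis rho1 : rho < 1.
Hypothesis W0 : forall i j, 0 <= W i j.
Hypothesis Wsum : forall i, \sum_j W i j <= rho.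

Lemma inj_IW (x : 'cV[R]_n) : x + W *m x = 0 -> x = 0.
Proof.
move=> Hx; apply/matrixP => j0 z; rewrite (ord1 z) !mxE.
have [k Hk] := argmax_ex j0 (fun i => `|x i 0|).
have Ek : x k 0 = - \sum_j W k j * x j 0.
  have := congr1 (fun M : 'M[R]_(n,1) => M k 0) Hx; rewrite !mxE => /eqP.
  by rewrite addr_eq0 => /eqP.
have : `|x k 0| <= rho * `|x k 0|.
  rewrite {1}Ek normrN; apply: (le_trans (ler_norm_sum _ _ _)).
  apply: (@le_trans _ _ (\sum_j W k j * `|x k 0|)).
    apply: ler_sum => j _; rewrite normrM ger0_norm //.
    by apply: ler_wpM2l => //; apply: Hk.
  rewrite -mulr_suml; exact: (ler_wpM2r (normr_ge0 _) (Wsum k)).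
move=> H; have H0 : `|x k 0| <= 0.
  have := normr_ge0 (x k 0); move: H; set t := `|x k 0|; move=> H H1.
  have H2 : (1 - rho) * t <= 0 by rewrite mulrBl mul1r subr_le0.
  by rewrite pmulr_rle0 ?subr_gt0 in H2.
have := Hk j0; have := normr_ge0 (x j0 0).
move=> a b; apply/eqP; rewrite -normr_eq0 eq_le; apply/andP; split => //.
exact: le_trans b H0.
Qed.

Lemma sol_IW : exists e : 'cV[R]_n,
  (forall i, 0 <= e i 0) /\ e + W *m e = const_mx 1.
Proof.
set A : 'M[R]_n := 1%:M + W.
have uA : A \in unitmx.
  rewrite -unitmx_tr -row_free_unit; apply: inj_row_free => v Hv.
  have : v^T + W *m v^T = 0.
    have := congr1 trmx Hv; rewrite trmx_mul trmxK trmx0 /A mulmxDl mul1mx //.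
  by move/inj_IW => H; rewrite -(trmxK v) H trmx0.
pose e : 'cV[R]_n := invmx A *m const_mx 1.
have He : e + W *m e = const_mx 1.
  by rewrite -{1}(mul1mx e) -mulmxDl mulmxA mulmxV // mul1mx.
clearbody e; exists e; split => //.
have Ei : forall i, e i 0 = 1 - \sum_j W i j * e j 0.
  move=> i; have := congr1 (fun M : 'M[R]_(n,1) => M i 0) He; rewrite !mxE => <-.
  by rewrite addrK.
move=> i.
have [k Hk] := argmin_ex i (fun i => e i 0).
suff: 0 <= e k 0 by move=> H; apply: le_trans H (Hk i).
rewrite leNgt; apply/negP => mneg.
have rho0 : 0 <= rho := le_trans (sumr_ge0 _ (fun j _ => W0 i j)) (Wsum i).
have Hup : forall l, e l 0 <= 1 - rho * e k 0.
  move=> l; rewrite Ei lerD2l lerN2.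
  apply: (@le_trans _ _ (\sum_j W l j * e k 0)); last first.
    by apply: ler_sum => j _; apply: ler_wpM2l => //; apply: Hk.
  rewrite -mulr_suml; apply: ler_wnM2r; [exact: ltW | exact: Wsum].
have Hlow : 1 - rho * (1 - rho * e k 0) <= e k 0.
  rewrite [X in _ <= X]Ei lerD2l lerN2.
  apply: (@le_trans _ _ (\sum_j W k j * (1 - rho * e k 0))).
    by apply: ler_sum => j _; apply: ler_wpM2l => //; apply: Hup.
  rewrite -mulr_suml; apply: ler_wpM2r; last exact: Wsum.
  have H0 : rho * e k 0 <= 0 by apply: mulr_ge0_le0 => //; exact: ltW.
  lra.
exact: (aux_ineq mneg rho0 rho1 Hlow).
Qed.

End Lin.

Section Part1.
Variable R : realType.

Lemma le_bigmax_seq (I : eqType) (r : seq I) (F : I -> R) i :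
  i \in r -> F i <= \big[Num.max/0]_(j <- r) F j.
Proof.
elim: r => [|a r IH] //; rewrite in_cons big_cons => /orP [/eqP -> | Hi].
  by rewrite le_max lexx.
by rewrite le_max IH ?orbT.
Qed.

Lemma le_coherence m n (U : 'M[R]_(m, n)) i :
  sqnorm (orth_proj U *m std_basis R i) <= coherence U.
Proof.
rewrite /coherence.
apply: (@le_bigmax_seq _ (index_enum 'I_n) (fun i0 => sqnorm (orth_proj U *m std_basis R i0))).
exact: mem_index_enum.
Qed.

Lemma sym_entry n (M : 'M[R]_n) i j : M^T = M -> M j i = M i j.
Proof. by move=> H; rewrite -{1}H mxE. Qed.

Lemma sq_row_sum n (M : 'M[R]_n) i : M^T = M -> M *m M = M ->
  \sum_j M i j ^+ 2 = M i i.
Proof.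
move=> Hs Hi; rewrite -{2}Hi mxE; apply: eq_bigr => j _.
by rewrite expr2 (sym_entry j i Hs).
Qed.

Lemma sqnorm_proj m n (U : 'M[R]_(m, n)) i :
  sqnorm (orth_proj U *m std_basis R i) = orth_proj U i i.
Proof.
rewrite /sqnorm /std_basis -colE -(sq_row_sum i (orth_proj_sym U) (orth_proj_idem U)).
apply: eq_bigr => j _; rewrite mxE (sym_entry j i (orth_proj_sym U)) //.
Qed.

Lemma part1_gen n (Q : 'M[R]_n) (s : R) : Q^T = Q -> Q *m Q = Q -> 1 / 2 < s ->
  (forall i, s <= Q i i) ->
  exists C : 'M[R]_n, correlation_matrix C /\ forall x : 'cV[R]_n, Q *m x = 0 -> C *m x = 0.
Proof.
move=> Qs Qi hs qge.
have spos : 0 < s by lra.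
have qpos : forall i, 0 < Q i i by move=> i; exact: lt_le_trans spos (qge i).
have qsum : forall i, \sum_j Q i j ^+ 2 = Q i i := fun i => sq_row_sum i Qs Qi.
have qoff : forall i, \sum_(j | j != i) Q i j ^+ 2 = Q i i - Q i i ^+ 2.
  by move=> i; have H := qsum i; rewrite (bigD1 i) //= in H; rewrite -{1}H addrAC subrr add0r.
pose W : 'M[R]_n := \matrix_(i, j) (if i == j then 0 else Q i j ^+ 2 / Q j j ^+ 2).
pose rho := (1 - s) / s.
have rho1 : rho < 1 by rewrite /rho ltr_pdivrMr // mul1r; lra.
have W0 : forall i j, 0 <= W i j.
  move=> i j; rewrite mxE; case: (i == j) => //.
  by apply: divr_ge0; apply: sqr_ge0.
have Wsum : forall i, \sum_j W i j <= rho.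
  move=> i; rewrite (bigD1 i) //= mxE eqxx add0r.
  apply: (@le_trans _ _ (\sum_(j | j != i) Q i j ^+ 2 / s ^+ 2)).
    apply: ler_sum => j ji; rewrite mxE eq_sym (negbTE ji).
    apply: ler_wpM2l; first exact: sqr_ge0.
    rewrite lef_pV2 ?posrE ?exprn_gt0 //.
    by rewrite !expr2; apply: ler_pM; [exact: ltW | exact: ltW | exact: qge | exact: qge].
  rewrite -mulr_suml qoff ler_pdivrMr ?exprn_gt0 //.
  have -> : rho * s ^+ 2 = (1 - s) * s.
    by rewrite /rho expr2 mulrA divfK // gt_eqF.
  have := qge i; have := qpos i; move: (Q i i) => q h1 h2.
  nra.
have [e [e0 He]] := sol_IW rho1 W0 Wsum.
pose d := \row_j (e j 0 / Q j j ^+ 2).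
have d0 : forall j, 0 <= d 0 j.
  by move=> j; rewrite mxE; apply: divr_ge0 => //; apply: sqr_ge0.
pose C := Q *m diag_mx d *m Q.
exists C; split; last first.
  by move=> x Qx; rewrite /C -mulmxA Qx mulmx0.
split.
  split.
    by rewrite /C !trmx_mul tr_diag_mx Qs mulmxA.
  move=> x.
  have -> : x^T *m C *m x = (Q *m x)^T *m diag_mx d *m (Q *m x).
    by rewrite /C trmx_mul Qs !mulmxA.
  move: (Q *m x) => y; rewrite mul_mx_diag mxE.
  apply: sumr_ge0 => j _; rewrite mxE mxE.
  by rewrite mulrC mulrA; apply: mulr_ge0 => //; rewrite -expr2 sqr_ge0.
move=> i.
have : ((1%:M + W) *m e) i 0 = 1 by rewrite mulmxDl mul1mx He mxE.
move=> <-; rewrite /C [LHS]mxE [RHS]mxE.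
apply: eq_bigr => j _; rewrite mul_mx_diag !mxE (sym_entry j i Qs).
have [<-|nij] := eqVneq i j.
  rewrite addr0 mul1r.
  have := qpos i; rewrite lt0r => /andP [qn _].
  by field.
rewrite add0r.
have := qpos j; rewrite lt0r => /andP [qn _].
by field.
Qed.

Lemma part1 m n (U : 'M[R]_(m, n)) : coherence U < 1 / 2 -> realizable U.
Proof.
move=> hc.
have Pc : forall i, orth_proj U i i <= coherence U.
  by move=> i; rewrite -sqnorm_proj; apply: le_coherence.
have Ps := orth_proj_sym U; have Pi := orth_proj_idem U.
have Pf := @orth_proj_fix R m n U.
move: (orth_proj U) Pc Ps Pi Pf => P Pc Ps Pi Pf.
pose Q : 'M[R]_n := 1%:M - P.
have Qs : Q^T = Q.
  by apply/matrixP => i j; rewrite !mxE (sym_entry i j Ps) eq_sym.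
have Qi : Q *m Q = Q.
  by rewrite /Q mulmxBl mul1mx mulmxBr mulmx1 Pi subrr subr0.
have Qv : forall v : 'rV[R]_n, (v <= U)%MS -> Q *m v^T = 0.
  by move=> v hv; rewrite /Q mulmxBl mul1mx Pf // subrr.
pose s := 1 - coherence U.
have hs : 1 / 2 < s by rewrite /s; lra.
have qge : forall i, s <= Q i i.
  by move=> i; rewrite /Q !mxE eqxx mulr1n /s lerD2l lerN2.
move: Q Qs Qi Qv qge => Q Qs Qi Qv qge.
have [C [HC HN]] := part1_gen Qs Qi hs qge.
by exists C; split => // v hv; apply: HN; exact: Qv.
Qed.
End Part1.

Section Part2.
Variable R : realType.

Lemma part2 (alpha : R) : 1 / 2 < alpha -> alpha <= 1 ->
  exists (m n : nat) (U : 'M[R]_(m, n)), coherence U = alpha /\ ~ realizable U.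
Proof.
move=> h1 h2.
pose a := Num.sqrt alpha; pose b := Num.sqrt (1 - alpha).
have ha : a ^+ 2 = alpha by rewrite sqr_sqrtr //; lra.
have hb : b ^+ 2 = 1 - alpha by rewrite sqr_sqrtr //; lra.
pose U : 'M[R]_(1, 2) := \matrix_(i, j) (if j == ord0 then a else b).
have U0 : U 0 ord0 = a by rewrite mxE.
have U1 : U 0 (lift ord0 ord0) = b by rewrite mxE.
have UU : U *m U^T = 1%:M.
  apply/matrixP => i j; rewrite (ord1 i) (ord1 j) !mxE !big_ord_recl big_ord0 /=.
  rewrite !mxE /=; rewrite -!expr2 ha hb; lra.
clearbody U.
have Pe : forall i, orth_proj U *m std_basis R i = U 0 i *: U^T.
  move=> i.
  have Hk : U *m (std_basis R i - U 0 i *: U^T) = 0.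
    rewrite mulmxBr -scalemxAr UU /std_basis -colE.
    by apply/matrixP => r c; rewrite (ord1 r) (ord1 c) !mxE /= mulr1 subrr.
  have := orth_proj_kill Hk; rewrite mulmxBr -scalemxAr (orth_proj_fix (submx_refl U)).
  by move/eqP; rewrite subr_eq0 => /eqP.
have sq : forall i, sqnorm (orth_proj U *m std_basis R i) = U 0 i ^+ 2.
  move=> i; rewrite Pe /sqnorm !big_ord_recl big_ord0 /= !mxE U0 U1.
  by rewrite !exprMn ha hb; ring.
exists 1%N, 2%N, U; split.
  rewrite /coherence !big_ord_recl big_ord0 /= !sq U0 U1 ha hb.
  have -> : Num.max (1 - alpha) 0 = 1 - alpha by apply: max_l; lra.
  by apply: max_l; lra.
move=> [C [[[Cs _] Cd] HN]].
have := HN U (submx_refl U).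
move/matrixP => H.
have e0 := H ord0 0; have e1 := H (lift ord0 ord0) 0.
rewrite !mxE !big_ord_recl !big_ord0 /= !mxE /= in e0 e1.
have c10 : C (lift ord0 ord0) ord0 = C ord0 (lift ord0 ord0).
  by rewrite -{1}Cs mxE.
rewrite c10 !Cd ?big_ord0 U0 U1 in e0 e1.
move: e0 e1; move: (C ord0 (lift ord0 ord0)) => c e0 e1.
have : a ^+ 2 - b ^+ 2 = a * (1 * a + (c * b + 0)) - b * (c * a + (1 * b + 0)) by ring.
rewrite e0 e1 ha hb; lra.
Qed.

End Part2.

End Helpers.

Theorem theorem4p2 (R : realType) :
  (forall (m n : nat) (U : 'M[R]_(m, n)),
      coherence U < 1 / 2 -> realizable U) /\
  (forall alpha : R, 1 / 2 < alpha -> alpha <= 1 ->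
      exists (m n : nat) (U : 'M[R]_(m, n)),
        coherence U = alpha /\ ~ realizable U).
Proof.
split.
- by move=> m n U; apply: Helpers.part1.
- by move=> alpha; apply: Helpers.part2.
Qed.
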